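(* Let $P\subseteq\mathbb{C}$ be a finitely generated field extension of $\mathbb{Q}$, $C=P\cap\mu$, $a\in P^\times$ and $k>1$ an integer. The following are equivalent: (i) $a$ is $k$-simple in $P$; (ii) for every divisor $m>1$ of $k$ there are no $\alpha\in P$ and root of unity $\epsilon$ with $a=\alpha^m\epsilon$; (iii) for every divisor $m>1$ of $k$, the image of $a$ in the quotient group $P^{\times}/C$ has no $m$-th root in $P^\times/C$.
   Context: $\mu$ is the group of all roots of unity in $\mathbb{C}^\times$. For an integer $k>1$, a nonzero $a\in P$ is $k$-simple (in $P$) if $a\notin\mu$ and for all $b\in P$, $\epsilon\in\mu$ and integers $d$, $a^d=b^k\epsilon$ implies $k\mid d$. *)

(* Defs.v *)
From mathcomp Require Import all_boot all_algebra.
From mathcomp Require Import complex Rstruct.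
Set Implicit Arguments. Unset Strict Implicit. Unset Printing Implicit Defensive.
Import GRing.Theory Num.Theory.
Local Open Scope ring_scope.

Definition Cc : numClosedFieldType := complex Rdefinitions.R.

Definition in_mu (x : Cc) : Prop := exists n : nat, (0 < n)%N /\ x ^+ n = 1.

Definition is_subfield (P : pred Cc) : Prop :=
  [/\ 0 \in P, 1 \in P,
      forall x y, x \in P -> y \in P -> x - y \in P,
      forall x y, x \in P -> y \in P -> x * y \in P &
      forall x, x \in P -> x^-1 \in P].

(** [P] is a finitely generated field extension of Q, i.e. the smallest subfield
    of C containing some finite list [s] (every subfield of C contains Q). *)
Definition fin_gen_field (P : pred Cc) : Prop :=
  exists s : seq Cc, is_subfield P /\ all (fun x => x \in P) s /\
    forall Q : pred Cc, is_subfield Q -> all (fun x => x \in Q) s ->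
      forall x, x \in P -> x \in Q.

Definition k_simple (P : pred Cc) (k : nat) (a : Cc) : Prop :=
  [/\ a \in P, a != 0, ~ in_mu a &
      forall (b eps : Cc) (d : int), b \in P -> in_mu eps ->
        a ^ d = b ^+ k * eps -> (k%:Z %| d)%Z].

(** Equality in the quotient group P^x / C, C = P ∩ mu, of the classes of
    x, y ∈ P^x:  x / y ∈ C. *)
Definition eq_mod_C (P : pred Cc) (x y : Cc) : Prop :=
  x / y \in P /\ in_mu (x / y).

(* Main.v *)
Require Import Defs.
From mathcomp Require Import all_boot all_algebra.
From mathcomp Require Import complex Rstruct.
From mathcomp Require Import ring.
Import GRing.Theory Num.Theory.
Local Open Scope ring_scope.

Lemma mu_nz (x : Cc) : in_mu x -> x != 0.
Proof.
case=> n [n0 e]; apply/eqP=> x0; move: e; rewrite x0 expr0n.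
by case: n n0 => // n _ /= /eqP; rewrite eq_sym oner_eq0.
Qed.

Lemma mu_mul (x y : Cc) : in_mu x -> in_mu y -> in_mu (x * y).
Proof.
case=> n [n0 ex] [p [p0 ey]]; exists (n * p)%N; split; first by rewrite muln_gt0 n0.
by rewrite exprMn exprM ex expr1n mulnC exprM ey expr1n mulr1.
Qed.

Lemma mu_inv (x : Cc) : in_mu x -> in_mu x^-1.
Proof. by case=> n [n0 ex]; exists n; rewrite exprVn ex invr1. Qed.

Lemma mu_pow (x : Cc) (p : nat) : in_mu x -> in_mu (x ^+ p).
Proof. by case=> n [n0 ex]; exists n; rewrite -exprM mulnC exprM ex expr1n. Qed.

Lemma mu_expz (x : Cc) (z : int) : in_mu x -> in_mu (x ^ z).
Proof.
move=> h; case: z => n; first by rewrite -exprnP; apply: mu_pow.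
by rewrite NegzE -exprnN; apply/mu_inv/mu_pow.
Qed.

Lemma mu_root (x : Cc) (g : nat) : (0 < g)%N -> in_mu (x ^+ g) -> in_mu x.
Proof.
move=> g0 [n [n0 e]]; exists (g * n)%N; split; first by rewrite muln_gt0 g0.
by rewrite exprM.
Qed.

Section Sub.
Variable P : pred Cc.
Hypothesis HP : is_subfield P.

Lemma P1 : 1 \in P. Proof. by case: HP. Qed.
Lemma PM x y : x \in P -> y \in P -> x * y \in P. Proof. by case: HP => _ _ _ h _; apply: h. Qed.
Lemma PV x : x \in P -> x^-1 \in P. Proof. by case: HP => _ _ _ _ h; apply: h. Qed.
Lemma PX x n : x \in P -> x ^+ n \in P.
Proof. move=> hx; elim: n => [|n IH]; first by rewrite expr0 P1. by rewrite exprS PM. Qed.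
Lemma PXz x (z : int) : x \in P -> x ^ z \in P.
Proof.
move=> hx; case: z => n; first by rewrite -exprnP PX.
by rewrite NegzE -exprnN PV // PX.
Qed.
End Sub.
Arguments P1 {P}. Arguments PM {P}. Arguments PV {P}. Arguments PX {P}. Arguments PXz {P}.

Theorem lemma2p8 (P : pred Cc) (a : Cc) (k : nat) :
  fin_gen_field P -> a \in P -> a != 0 -> (1 < k)%N ->
  (k_simple P k a <->
     (forall m : nat, (1 < m)%N -> (m %| k)%N ->
        ~ exists alpha eps : Cc,
            [/\ alpha \in P, in_mu eps & a = alpha ^+ m * eps])) /\
  ((forall m : nat, (1 < m)%N -> (m %| k)%N ->
        ~ exists alpha eps : Cc,
            [/\ alpha \in P, in_mu eps & a = alpha ^+ m * eps]) <->
     (forall m : nat, (1 < m)%N -> (m %| k)%N ->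
        ~ exists beta : Cc,
            [/\ beta \in P, beta != 0 & eq_mod_C P (beta ^+ m) a])).
Proof.
move=> [s [HP _]] aP a0 k1.
have k0 : (0 < k)%N by apply: ltn_trans k1.
split; last first.
  split=> H m m1 mk.
    case=> beta [bP b0 [qP qmu]]; apply: (H m m1 mk).
    exists beta, (beta ^+ m / a)^-1; split => //; first exact: mu_inv.
    by rewrite invf_div mulrC divfK // expf_neq0.
  case=> alpha [eps [alP emu ae]]; apply: (H m m1 mk).
  have al0 : alpha != 0.
    by apply: contraNneq a0 => al0; rewrite ae al0 expr0n gtn_eqF ?mul0r // ltnW.
  have e0 := mu_nz eps emu.
  have q : alpha ^+ m / a = eps^-1.
    by rewrite ae invfM mulrA divff ?mul1r // expf_neq0.
  exists alpha; split => //; rewrite /eq_mod_C q; split; last exact: mu_inv.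
  apply: (PV HP); have -> : eps = a / alpha ^+ m by rewrite ae mulrAC divff ?mul1r // expf_neq0.
  by apply: (PM HP) => //; apply/(PV HP)/(PX HP).
split.
  case=> _ _ nmu H m m1 mk [alpha [eps [alP emu ae]]].
  have := H alpha (eps ^+ (k %/ m)) (Posz (k %/ m)) alP (mu_pow _ (k %/ m) emu).
  have -> : a ^ (Posz (k %/ m)) = alpha ^+ k * eps ^+ (k %/ m).
    by rewrite -exprnP ae exprMn -exprM mulnC divnK.
  move=> /(_ erefl); rewrite dvdzE /= => kd.
  have mk' : (m <= k)%N by apply: dvdn_leq.
  have p0 : (0 < k %/ m)%N by rewrite divn_gt0 // ltnW.
  have := dvdn_leq p0 kd; rewrite leqNgt ltn_Pdiv //; exact: ltnW.
move=> H; split => //.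
  move=> amu; apply: (H k k1 (dvdnn k)); exists 1, a; split => //; first exact: P1 HP.
  by rewrite expr1n mul1r.
move=> b eps d bP emu e.
have b0 : b != 0.
  apply: contraTneq (expfz_neq0 d a0) => b0.
  by rewrite e b0 expr0n gtn_eqF // mul0r eqxx.
pose g := gcdn `|d|%N k.
have g0 : (0 < g)%N by rewrite gcdn_gt0 k0 orbT.
have gd : (Posz g %| d)%Z by exact: (dvdz_gcdl d k).
case: (Bezoutz d k) => u [v huv].
pose m := (k %/ g)%N.
have km : k = (m * g)%N by rewrite divnK // dvdn_gcdr.
have [m1|m1] := ltnP 1 m; last first.
  have mp : (0 < m)%N by rewrite divn_gt0 // dvdn_leq // dvdn_gcdr.
  have -> : k = g by rewrite km (_ : m = 1%N) ?mul1n //; apply/eqP; rewrite eqn_leq m1 mp.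
  exact: gd.
exfalso.
have mk : (m %| k)%N by apply/dvdnP; exists g; rewrite mulnC /m divnK // dvdn_gcdr.
pose c := b ^ u * a ^ v.
have c0 : c != 0 by rewrite mulf_neq0 // expfz_neq0.
apply: (H m m1 mk); exists c, (a / c ^+ m); split.
- by apply: (PM HP); apply: (PXz HP).
- apply: (mu_root _ g g0).
  have E1 : (b ^+ k * eps) ^ u = b ^ (u * k) * eps ^ u.
    by rewrite expfzMl exprnP exprz_exp (mulrC (Posz k) u).
  have E2 : (a ^ Posz k) ^ v = a ^ (v * k) by rewrite exprz_exp (mulrC (Posz k) v).
  have E3 : c ^+ k = b ^ (u * k) * a ^ (v * k) by rewrite exprMn !exprnP !exprz_exp.
  have -> : (a / c ^+ m) ^+ g = eps ^ u.
    rewrite expr_div_n -exprM -km E3 exprnP (_ : Posz g = gcdz d k) // -huv.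
    rewrite expfzDr // (mulrC u d) -(exprz_exp a d u) e E1 -E2 exprz_exp.
    have X0 : b ^ (u * k) != 0 by rewrite expfz_neq0.
    have Y0 : a ^ (v * k) != 0 by rewrite expfz_neq0.
    by field; rewrite X0 expfz_neq0.
  exact: (mu_expz eps u emu).
- by rewrite mulrC divfK // expf_neq0.
Qed.
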